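(* Let $J$ be an abelian topological semigroup with identity $0$ and $X$ a topological vector space over $\mathbf{C}$. If $\phi\in P^n(J,X)$, then $\phi=\sum_{j=0}^n a_j$ where $a_j\in P^j(J,X)$ and $a_j(mt)=m^j a_j(t)$ for all $m\in\mathbf{Z}_+$ and $t\in J$.
   Context: $\mathbf{Z}_+=\{0,1,2,\dots\}$. A continuous $p:J\to X$ is a polynomial of degree at most $n$ if for all $s,t\in J$ there are $a_0(s,t),\dots,a_n(s,t)\in X$ with $p(s+mt)=\sum_{j=0}^n a_j(s,t)m^j$ for all $m\in\mathbf{Z}_+$; $P^n(J,X)$ is the space of such polynomials. *)

(* Defs.v *)
From HB Require Import structures.
From mathcomp Require Import all_boot all_order all_algebra.
From mathcomp Require Import all_classical all_reals all_analysis.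
From mathcomp.real_closed Require Import complex.
Set Implicit Arguments. Unset Strict Implicit. Unset Printing Implicit Defensive.
Import Order.TTheory GRing.Theory Num.Theory.
Import numFieldTopology.Exports.
Local Open Scope ring_scope.

(* J : abelian topological semigroup with identity 0 = TopologicalNmodule
   (commutative monoid, topology, continuous addition); m t := t *+ m. *)

Definition is_poly_le (R : realType) (J : TopologicalNmodule.type)
    (X : topologicalLmodType (complex R)) (n : nat) (p : J -> X) : Prop :=
  continuous p /\
  forall s t : J, exists a : nat -> X,
    forall m : nat, p (s + t *+ m) = \sum_(j < n.+1) ((m%:R : complex R) ^+ j) *: a j.

(* Main.v *)
Require Import Defs.
From mathcomp Require Import all_boot all_order all_algebra.
From mathcomp Require Import all_classical all_reals all_analysis.
From mathcomp.real_closed Require Import complex.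
Import Order.TTheory GRing.Theory Num.Theory.
Import numFieldTopology.Exports.
Local Open Scope ring_scope.

Section Vdm.
Variable (F : fieldType).
Hypothesis char0 : forall k : nat, (k%:R : F) = 0 -> k = 0%N.

Lemma vdm_inv (N : nat) : exists W : nat -> nat -> F, forall i k, (i < N)%N -> (k < N)%N ->
  \sum_(q < N) (q%:R : F)^+k * W q i = (i == k)%:R.
Proof.
case: N => [|N]; first by exists (fun _ _ => 0).
pose a : 'rV[F]_N.+1 := \row_j (j%:R : F).
pose V := Vandermonde N.+1 a.
have VU : V \in unitmx.
  rewrite unitmxE det_Vandermonde unitfE; apply/prodf_neq0 => i _; apply/prodf_neq0 => j ij.
  rewrite !mxE subr_eq0; apply/eqP => /eqP; rewrite -subr_eq0 -natrB ?(ltnW ij) //.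
  move/eqP/char0/eqP; rewrite subn_eq0 leqNgt ij //.
exists (fun q i => if (q < N.+1)%N && (i < N.+1)%N then invmx V (inord q) (inord i) else 0).
move=> i k Hi Hk.
have := congr1 (fun M : 'M[F]_N.+1 => M (inord k) (inord i)) (mulmxV VU).
have -> : (i == k) = (inord k == inord i :> 'I_N.+1).
  by rewrite eq_sym -(inj_eq val_inj) /= !inordK.
rewrite !mxE => <-.
apply: eq_bigr => q _; rewrite !mxE Hi /= ltn_ord inord_val inordK //.
Qed.
End Vdm.

Section Extract.
Variables (F : fieldType) (V : lmodType F).

Lemma extract N (W : nat -> nat -> F)
  (HW : forall i k, (i < N)%N -> (k < N)%N -> \sum_(q < N) (q%:R : F)^+k * W q i = (i == k)%:R)
  (c f : nat -> V) :
  (forall m, (m < N)%N -> f m = \sum_(k < N) (m%:R : F)^+k *: c k) ->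
  forall i, (i < N)%N -> c i = \sum_(q < N) W q i *: f q.
Proof.
move=> Hf i Hi.
under eq_bigr => q _ do rewrite (Hf q (ltn_ord q)) scaler_sumr.
rewrite exchange_big /=.
under eq_bigr => k _ do (under eq_bigr => q _ do rewrite scalerA mulrC;
  rewrite -scaler_suml (HW i k Hi (ltn_ord k))).
rewrite (bigD1 (Ordinal Hi)) //= eqxx scale1r big1 ?addr0 // => k Hk.
have -> : (i == k) = false.
  apply/negbTE; apply: contra Hk => /eqP ik; apply/eqP/val_inj => /=; by rewrite ik.
by rewrite scale0r.
Qed.

Lemma lincomb_poly N M (w : nat -> F) (g : nat -> nat -> V) :
  (forall q, exists a : nat -> V, forall l, g q l = \sum_(p < N) (l%:R : F)^+p *: a p) ->
  exists b : nat -> V, forall l, \sum_(q < M) w q *: g q l = \sum_(p < N) (l%:R : F)^+p *: b p.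
Proof.
move=> H; have [aa Haa] := choice H.
exists (fun p => \sum_(q < M) w q *: aa q p) => l.
under eq_bigr => q _ do rewrite Haa scaler_sumr.
rewrite exchange_big /=; apply: eq_bigr => p _.
rewrite scaler_sumr; apply: eq_bigr => q _.
by rewrite !scalerA mulrC.
Qed.

End Extract.

Section Topo.
Variables (T : topologicalType).

Lemma contD (M : TopologicalNmodule.type) (f g : T -> M) :
  continuous f -> continuous g -> continuous (fun x => f x + g x).
Proof.
move=> cf cg x.
apply: (@continuous_comp _ _ _ (fun x => (f x, g x)) (fun z : M * M => z.1 + z.2)).
  by apply: cvg_pair; [exact: cf | exact: cg].
exact: add_continuous.
Qed.

Lemma cont_sum (M : TopologicalNmodule.type) K (f : nat -> T -> M) :
  (forall q, continuous (f q)) -> continuous (fun x => \sum_(q < K) f q x).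
Proof.
move=> cf; elim: K => [|K IH].
  under eq_fun => x do rewrite big_ord0. exact: cst_continuous.
under eq_fun => x do rewrite big_ord_recr /=.
exact: contD.
Qed.

Lemma contZ (C : numDomainType) (X : topologicalLmodType C) (c : C) (f : T -> X) :
  continuous f -> continuous (fun x => c *: f x).
Proof.
move=> cf x.
apply: (@continuous_comp _ _ _ (fun x => ((c : C^o), f x)) (fun z : C^o * X => z.1 *: z.2)).
  by apply: (@cvg_pair _ _ _ _ (nbhs (c : C^o))); [exact: cvg_cst | exact: cf].
exact: scale_continuous.
Qed.

End Topo.

Lemma cont_natmul (J : TopologicalNmodule.type) n : continuous (fun x : J => x *+ n).
Proof.
elim: n => [|n IH].
  under eq_fun => x do rewrite mulr0n. exact: cst_continuous.
under eq_fun => x do rewrite mulrS.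
by apply: contD => // y; apply: cvg_id.
Qed.

Lemma polyP_lincomb (R : realType) (J : TopologicalNmodule.type)
    (X : topologicalLmodType (complex R)) (n : nat) (phi : J -> X)
    (w : nat -> complex R) K :
  is_poly_le n phi -> is_poly_le n (fun t => \sum_(q < K) w q *: phi (t *+ q)).
Proof.
move=> [cphi Hp]; split.
  apply: (@cont_sum J X K (fun q t => w q *: phi (t *+ q))) => q; apply: contZ => x.
  exact: (continuous_comp (cont_natmul _ _ _) (cphi _)).
move=> s t.
have [|b Hb] := @lincomb_poly _ X n.+1 K w (fun q m => phi ((s + t *+ m) *+ q)).
  move=> q; have [a Ha] := Hp (s *+ q) (t *+ q).
  by exists a => l; rewrite mulrnDl mulrnAC Ha.
by exists b.
Qed.

Theorem proposition2p3 (R : realType) (J : TopologicalNmodule.type)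
    (X : topologicalLmodType (complex R)) (n : nat) (phi : J -> X) :
  is_poly_le n phi ->
  exists a : nat -> J -> X,
    (forall j : nat, (j <= n)%N ->
       is_poly_le j (a j) /\
       forall (m : nat) (t : J), a j (t *+ m) = ((m%:R : complex R) ^+ j) *: a j t) /\
    (forall t : J, phi t = \sum_(j < n.+1) a j t).
Proof.
move=> Hphi; have [cphi Hp] := Hphi.
have char0 : forall k : nat, (k%:R : complex R) = 0 -> k = 0%N.
  by move=> k /eqP; rewrite pnatr_eq0 => /eqP.
have [W HW] := vdm_inv _ char0 n.+1.
have uniq : forall K (c c' : nat -> X),
    (forall m, \sum_(k < K) (m%:R : complex R)^+k *: c k
             = \sum_(k < K) (m%:R : complex R)^+k *: c' k) ->
    forall i, (i < K)%N -> c i = c' i.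
  move=> K c c' H i Hi; have [W' HW'] := vdm_inv _ char0 K.
  rewrite (@extract _ X K W' HW' c (fun m => \sum_(k < K) (m%:R : complex R)^+k *: c k) _ i Hi); last by [].
  rewrite (@extract _ X K W' HW' c' (fun m => \sum_(k < K) (m%:R : complex R)^+k *: c k) _ i Hi) //.
pose A j t := \sum_(q < n.+1) W q j *: phi (t *+ q).
have PA : forall j, is_poly_le n (A j) := fun j => @polyP_lincomb _ _ _ n phi (fun q => W q j) n.+1 Hphi.
have exp1 : forall t m, phi (t *+ m) = \sum_(j < n.+1) (m%:R : complex R)^+j *: A j t.
  move=> t m; have [a Ha] := Hp 0 t.
  have co : forall j, (j < n.+1)%N -> a j = A j t.
    apply: (@extract _ X n.+1 W HW a (fun m => phi (t *+ m))) => k _.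
    by rewrite -Ha add0r.
  rewrite -[t *+ m]add0r Ha; apply: eq_bigr => j _; by rewrite co.
have homog : forall j, (j < n.+1)%N -> forall k t, A j (t *+ k) = (k%:R : complex R)^+j *: A j t.
  move=> j Hj k t.
  apply: (uniq n.+1 (fun j => A j (t *+ k)) (fun j => (k%:R)^+j *: A j t)) => // m.
  rewrite -exp1 -mulrnA exp1; apply: eq_bigr => i _.
  by rewrite natrM exprMn !scalerA mulrC.
exists A; split; last first.
  move=> t; have := exp1 t 1; rewrite mulr1n => ->.
  by apply: eq_bigr => j _; rewrite expr1n scale1r.
move=> j Hj; split; last by move=> m t; apply: homog.
split; first exact: (PA j).1.
move=> s t.
pose c i u v := \sum_(q < n.+1) W q i *: A j (u + v *+ q).
have E1 : forall u v m, A j (u + v *+ m) = \sum_(i < n.+1) (m%:R : complex R)^+i *: c i u v.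
  move=> u v m; have [a Ha] := (PA j).2 u v.
  have co : forall i, (i < n.+1)%N -> a i = c i u v.
    exact: (@extract _ X n.+1 W HW a (fun m => A j (u + v *+ m)) (fun m _ => Ha m)).
  rewrite Ha; apply: eq_bigr => i _; by rewrite co.
have cscale : forall i, (i < n.+1)%N -> forall u v l,
    c i u (v *+ l) = (l%:R : complex R)^+i *: c i u v.
  move=> i Hi u v l.
  apply: (uniq n.+1 (fun i => c i u (v *+ l)) (fun i => (l%:R)^+i *: c i u v)) => // m.
  rewrite -E1 -mulrnA E1; apply: eq_bigr => k _.
  by rewrite natrM exprMn !scalerA mulrC.
have chom : forall i u v l, c i (u *+ l) (v *+ l) = (l%:R : complex R)^+j *: c i u v.
  move=> i u v l; rewrite /c scaler_sumr; apply: eq_bigr => q _.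
  by rewrite -mulrnAC -mulrnDl homog // !scalerA mulrC.
have spoly : forall i v, exists e : nat -> X, forall l,
    c i (s *+ l) v = \sum_(p < n.+1) (l%:R : complex R)^+p *: e p.
  move=> i v.
  apply: (@lincomb_poly _ X n.+1 n.+1 (fun q => W q i) (fun q l => A j (s *+ l + v *+ q))) => q.
  have [a Ha] := (PA j).2 (v *+ q) s.
  by exists a => l; rewrite addrC Ha.
have vanish : forall i, (j < i)%N -> (i < n.+1)%N -> c i s t = 0.
  move=> i ji Hi.
  have [e He] := spoly i t.
  have key : forall l : nat, (l%:R : complex R)^+j *: c i s t
      = \sum_(p < n.+1) (l%:R : complex R)^+(i + p) *: e p.
    move=> l; rewrite -chom cscale // He scaler_sumr; apply: eq_bigr => p _.
    by rewrite scalerA exprD.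
  have Hj' : (j < i + n.+1)%N by apply: (leq_trans ji); apply: leq_addr.
  have H0 : forall l : nat,
      \sum_(r < (i + n.+1)%N) (l%:R : complex R)^+r *: (if nat_of_ord r == j then c i s t else 0)
    = \sum_(r < (i + n.+1)%N) (l%:R : complex R)^+r *: (if (i <= r)%N then e (r - i)%N else 0).
  move=> l.
  rewrite (bigD1 (Ordinal Hj')) //= eqxx big1 ?addr0; last first.
    move=> r Hr; have -> : (val r == j) = false.
      apply/negbTE; apply: contra Hr => /eqP rj; apply/eqP/val_inj => /=; by rewrite rj.
    by rewrite scaler0.
  rewrite big_split_ord /= big1 ?add0r; last first.
    by move=> r _; rewrite /= leqNgt ltn_ord /= scaler0.
  rewrite key; apply: eq_bigr => p _ /=.
  by rewrite leq_addr addKn.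
  have := uniq _ (fun r => if r == j then c i s t else 0)
     (fun r => if (i <= r)%N then e (r - i)%N else 0) H0 j Hj'.
  by rewrite eqxx leqNgt ji.
exists (fun i => c i s t) => m.
rewrite E1 (big_ord_widen n.+1 (fun k : nat => (m%:R : complex R)^+k *: c k s t) (Hj : (j.+1 <= n.+1)%N)) [RHS]big_mkcond; apply: eq_bigr => i _.
case: ifP => // /negbT; rewrite ltnS -ltnNge => ji.
by rewrite vanish ?scaler0.
Qed.
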